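(* Let $f : M^* \to \mathbb{R}^3$ be a trivalent polyhedral surface with nonvanishing edge lengths, with the three face normals at every vertex linearly independent and adjacent faces satisfying $n_l \neq \pm n_r$. Then $f$ is a discrete minimal surface (i.e. $H_\phi = 0$ for every face $\phi \in F^*$) if and only if $f$ is a critical point of the area functional with respect to all face offsets of finite support, in the following sense: for every smooth family of height functions $h^t$ with $h^0 = h$ such that $\dot h = \frac{d}{dt}h^t|_{t=0}$ has finite support, with face normals $n$ kept fixed and $f^t$ the corresponding polyhedral surfaces, one has \[ \sum_{\phi \in F^*} \frac{d}{dt}\mathrm{Area}(f^t(\phi))\Big|_{t=0} = 0 \] (a sum with only finitely many nonzero terms).
   Context: Let $M=(V,E,F)$ be a cellular decomposition of an oriented surface without boundary (each face having finitely many edges, each vertex of finite degree), and $M^*=(V^*,E^*,F^* )$ its dual decomposition; faces of $M^*$ correspond bijectively to vertices of $M$. A polyhedral surface is a map $f : V^* \to \mathbb{R}^3$ such that the vertices of each face $\phi \in F^*$ are coplanar (faces may self-intersect). It is trivalent if every vertex of $M^*$ has degree 3. For each face $\phi$, $n_\phi \in \mathbb{S}^2$ is its unit normal (compatible with the orientation) and $h_\phi = \langle f_i, n_\phi\rangle$ for any vertex $i$ of $\phi$ is its height; the vertices of a trivalent surface are determined by $(n,h)$, vertex $i$ being the unique point with $\langle f_i,n_\phi\rangle = h_\phi$ for the three faces $\phi$ containing it. For an oriented edge from $i$ to $j$, the left face $l$ is the face whose positively oriented boundary traverses $i \to j$, and the right face $r$ is the other face containing the edge. The edge length is $\ell_{ij}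 = \|f_j - f_i\|$ and the dihedral angle $\alpha_{ij} \in (-\pi,\pi)$ is defined by $\cos\alpha_{ij} = \langle n_l, n_r\rangle$ and $\sin\alpha_{ij} = \langle n_l \times n_r, (f_j - f_i)/\|f_j-f_i\|\rangle$. The integrated mean curvature of a face is $H_\phi = \frac12\sum_{ij\in\partial\phi}\ell_{ij}\tan\frac{\alpha_{ij}}{2}$. The signed area of a face $\phi$ with boundary vertices $i_1,\dots,i_m$ in positive cyclic order is $\mathrm{Area}(f(\phi)) = \frac12\sum_{s=1}^m \langle f_{i_s}\times f_{i_{s+1}}, n_\phi\rangle$ (indices mod $m$). *)

(* Defs.v *)
From Stdlib Require Import Reals List.
From Coquelicot Require Import Coquelicot.
Open Scope R_scope.

Record vec3 := V3 { v3x : R; v3y : R; v3z : R }.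

Definition v3dot (a b : vec3) : R := v3x a * v3x b + v3y a * v3y b + v3z a * v3z b.
Definition v3cross (a b : vec3) : vec3 :=
  V3 (v3y a * v3z b - v3z a * v3y b)
     (v3z a * v3x b - v3x a * v3z b)
     (v3x a * v3y b - v3y a * v3x b).
Definition v3add (a b : vec3) : vec3 := V3 (v3x a + v3x b) (v3y a + v3y b) (v3z a + v3z b).
Definition v3sub (a b : vec3) : vec3 := V3 (v3x a - v3x b) (v3y a - v3y b) (v3z a - v3z b).
Definition v3scale (c : R) (a : vec3) : vec3 := V3 (c * v3x a) (c * v3y a) (c * v3z a).
Definition v3opp (a : vec3) : vec3 := V3 (- v3x a) (- v3y a) (- v3z a).
Definition v3zero : vec3 := V3 0 0 0.
Definition v3norm (a : vec3) : R := sqrt (v3dot a a).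

Definition lin_indep3 (a b c : vec3) : Prop :=
  forall x y z : R,
    v3add (v3add (v3scale x a) (v3scale y b)) (v3scale z c) = v3zero ->
    x = 0 /\ y = 0 /\ z = 0.

Definition sumR {A : Type} (F : A -> R) (l : list A) : R :=
  fold_right Rplus 0 (map F l).

(* ---------- oriented combinatorial surface (the dual decomposition M-star) ----------
   Darts = oriented edges of M-star.  [src d] is the initial vertex, [drev d] the
   reversed dart, [face d] the face of M-star whose positively oriented boundary
   traverses d (the left face), [nxt d] the next dart along that boundary. *)
Record OMap := {
  dart : Type; vert : Type; fc : Type;
  src : dart -> vert;
  drev : dart -> dart;
  nxt : dart -> dart;
  face : dart -> fc;
  fdart : fc -> dart;
  fdeg : fc -> nat;
  rev_invol : forall d, drev (drev d) = d;
  rev_nofix : forall d, drev d <> d;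
  nxt_src : forall d, src (nxt d) = src (drev d);
  nxt_face : forall d, face (nxt d) = face d;
  nxt_inj : forall d d', nxt d = nxt d' -> d = d';
  fdart_face : forall p, face (fdart p) = p;
  fdeg_pos : forall p, (0 < fdeg p)%nat;
  fdeg_cycle : forall p, Nat.iter (fdeg p) nxt (fdart p) = fdart p;
  fdeg_min : forall p k, (0 < k < fdeg p)%nat -> Nat.iter k nxt (fdart p) <> fdart p;
  face_orbit : forall d, exists k, (k < fdeg (face d))%nat /\
                          d = Nat.iter k nxt (fdart (face d));
  vert_dart : forall v, exists d, src d = v
}.

Section MapDefs.
Variable M : OMap.

Definition tgt (d : dart M) : vert M := src M (drev M d).
(* rotation of the darts leaving a vertex *)
Definition rot (d : dart M) : dart M := nxt M (drev M d).

Definition trivalent : Prop :=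
  forall d, rot (rot (rot d)) = d /\ rot d <> d /\ rot (rot d) <> d /\
    (forall d', src M d' = src M d -> d' = d \/ d' = rot d \/ d' = rot (rot d)).

Definition bdarts (p : fc M) : list (dart M) :=
  map (fun k => Nat.iter k (nxt M) (fdart M p)) (seq 0 (fdeg M p)).

Definition polyhedral (f : vert M -> vec3) (n : fc M -> vec3) : Prop :=
  (forall p, v3norm (n p) = 1) /\
  (forall d d', face M d = face M d' ->
     v3dot (f (src M d)) (n (face M d)) = v3dot (f (src M d')) (n (face M d))).

Definition height (f : vert M -> vec3) (n : fc M -> vec3) (p : fc M) : R :=
  v3dot (f (src M (fdart M p))) (n p).

Definition edge_length (f : vert M -> vec3) (d : dart M) : R :=
  v3norm (v3sub (f (tgt d)) (f (src M d))).

(* a is the dihedral angle of the oriented edge d: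
   left face = face d, right face = face (drev d) *)
Definition is_dihedral (f : vert M -> vec3) (n : fc M -> vec3) (d : dart M) (a : R) : Prop :=
  - PI < a < PI /\
  cos a = v3dot (n (face M d)) (n (face M (drev M d))) /\
  sin a = v3dot (v3cross (n (face M d)) (n (face M (drev M d))))
                (v3scale (/ edge_length f d) (v3sub (f (tgt d)) (f (src M d)))).

Definition mean_curv (f : vert M -> vec3) (alpha : dart M -> R) (p : fc M) : R :=
  / 2 * sumR (fun d => edge_length f d * tan (alpha d / 2)) (bdarts p).

(* signed area of a face *)
Definition face_area (f : vert M -> vec3) (n : fc M -> vec3) (p : fc M) : R :=
  / 2 * sumR (fun d => v3dot (v3cross (f (src M d)) (f (tgt d))) (n p)) (bdarts p).

End MapDefs.

(* Main.v *)
Require Import Defs.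
From Stdlib Require Import Reals List Permutation Lra Lia Psatz Classical ClassicalEpsilon FunctionalExtensionality.
From Coquelicot Require Import Coquelicot.
Open Scope R_scope.


Ltac vdestr := repeat match goal with v : vec3 |- _ => destruct v end.
Ltac vunf := unfold v3dot, v3cross, v3add, v3sub, v3scale, v3opp, v3zero in *; simpl in *.
Ltac veq := vdestr; vunf; f_equal; ring.

Definition det3 (a b c : vec3) := v3dot a (v3cross b c).

Lemma cramer_id (x n1 n2 n3 : vec3) :
  v3scale (det3 n1 n2 n3) x =
  v3add (v3add (v3scale (v3dot x n1) (v3cross n2 n3)) (v3scale (v3dot x n2) (v3cross n3 n1)))
        (v3scale (v3dot x n3) (v3cross n1 n2)).
Proof. unfold det3; veq. Qed.

Lemma dual_id (w n1 n2 n3 : vec3) :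
  v3add (v3add (v3scale (v3dot w (v3cross n2 n3)) n1) (v3scale (v3dot w (v3cross n3 n1)) n2))
        (v3scale (v3dot w (v3cross n1 n2)) n3) = v3scale (det3 n1 n2 n3) w.
Proof. unfold det3; veq. Qed.

Lemma unit_dot (a : vec3) : v3norm a = 1 -> v3dot a a = 1.
Proof.
  unfold v3norm; intro H.
  assert (0 <= v3dot a a) by (destruct a; unfold v3dot; simpl; nra).
  rewrite <- (sqrt_sqrt _ H0), H; ring.
Qed.

Lemma dot_self_zero (a : vec3) : v3dot a a = 0 -> a = v3zero.
Proof.
  destruct a as [x y z]; unfold v3dot, v3zero; simpl; intro H.
  assert (x = 0) by nra. assert (y = 0) by nra. assert (z = 0) by nra. subst; reflexivity.
Qed.

Lemma scale0 (w : vec3) : v3scale 0 w = v3zero.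
Proof. veq. Qed.

Lemma det_nz (n1 n2 n3 : vec3) :
  v3norm n2 = 1 -> v3norm n3 = 1 -> lin_indep3 n1 n2 n3 -> det3 n1 n2 n3 <> 0.
Proof.
  intros H2 H3 Hi Hd.
  apply unit_dot in H2; apply unit_dot in H3.
  pose proof (dual_id (v3cross n2 n3) n1 n2 n3) as E. rewrite Hd, scale0 in E.
  destruct (Hi _ _ _ E) as [Ha _].
  apply dot_self_zero in Ha.
  set (s := v3dot n2 n3).
  assert (Hl : v3dot (v3cross n2 n3) (v3cross n2 n3) = v3dot n2 n2 * v3dot n3 n3 - s * s) by (unfold s; vdestr; vunf; ring).
  rewrite Ha, H2, H3 in Hl. unfold v3dot, v3zero in Hl; simpl in Hl.
  assert (Hb : v3dot (v3sub n2 (v3scale s n3)) (v3sub n2 (v3scale s n3)) =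
               v3dot n2 n2 - 2 * s * s + s * s * v3dot n3 n3) by (unfold s; vdestr; vunf; ring).
  rewrite H2, H3 in Hb.
  assert (Hz : v3sub n2 (v3scale s n3) = v3zero) by (apply dot_self_zero; rewrite Hb; nra).
  assert (E2 : v3add (v3add (v3scale 0 n1) (v3scale 1 n2)) (v3scale (- s) n3) = v3zero).
  { rewrite <- Hz. veq. }
  destruct (Hi _ _ _ E2) as [_ [Hy _]]. lra.
Qed.


Lemma sumR_nil {A} (F : A -> R) : sumR F nil = 0.
Proof. reflexivity. Qed.
Lemma sumR_cons {A} (F : A -> R) x l : sumR F (x :: l) = F x + sumR F l.
Proof. reflexivity. Qed.
Lemma sumR_app {A} (F : A -> R) l1 l2 : sumR F (l1 ++ l2) = sumR F l1 + sumR F l2.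
Proof. induction l1; simpl; unfold sumR in *; simpl; [ring|rewrite IHl1; ring]. Qed.
Lemma sumR_ext {A} (F G : A -> R) l : (forall x, In x l -> F x = G x) -> sumR F l = sumR G l.
Proof. induction l; intros H; [reflexivity|]. rewrite !sumR_cons, H, IHl; simpl; auto; intros; apply H; simpl; auto. Qed.
Lemma sumR_plus {A} (F G : A -> R) l : sumR (fun x => F x + G x) l = sumR F l + sumR G l.
Proof. induction l; [simpl; unfold sumR; simpl; ring|]. rewrite !sumR_cons, IHl; ring. Qed.
Lemma sumR_minus {A} (F G : A -> R) l : sumR (fun x => F x - G x) l = sumR F l - sumR G l.
Proof. induction l; [simpl; unfold sumR; simpl; ring|]. rewrite !sumR_cons, IHl; ring. Qed.
Lemma sumR_scal {A} (c : R) (F : A -> R) l : sumR (fun x => c * F x) l = c * sumR F l.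
Proof. induction l; [simpl; unfold sumR; simpl; ring|]. rewrite !sumR_cons, IHl; ring. Qed.
Lemma sumR_map {A B} (F : B -> R) (g : A -> B) l : sumR F (map g l) = sumR (fun x => F (g x)) l.
Proof. unfold sumR; rewrite map_map; reflexivity. Qed.
Lemma sumR_flat_map {A B} (F : B -> R) (g : A -> list B) l :
  sumR F (flat_map g l) = sumR (fun x => sumR F (g x)) l.
Proof. induction l; [reflexivity|]. simpl flat_map. rewrite sumR_app, sumR_cons, IHl; reflexivity. Qed.
Lemma sumR_perm {A} (F : A -> R) l1 l2 : Permutation l1 l2 -> sumR F l1 = sumR F l2.
Proof. induction 1; rewrite ?sumR_cons; try lra. Qed.
Lemma sumR_zero {A} (F : A -> R) l : (forall x, In x l -> F x = 0) -> sumR F l = 0.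
Proof. intros H. rewrite (sumR_ext F (fun _ => 0)) by auto. induction l; [reflexivity|]. rewrite sumR_cons, IHl; [ring|]. intros; apply H; simpl; auto. Qed.
Lemma sumR_nz {A} (F : A -> R) l : sumR F l <> 0 -> exists x, In x l /\ F x <> 0.
Proof.
  intros H. destruct (classic (exists x, In x l /\ F x <> 0)) as [|Hn]; auto.
  exfalso; apply H, sumR_zero. intros x Hx. apply NNPP; intro; apply Hn; eauto.
Qed.

Definition nzb {A} (F : A -> R) (x : A) : bool := if Req_EM_T (F x) 0 then false else true.

Lemma sumR_filter {A} (F : A -> R) l : sumR F l = sumR F (filter (nzb F) l).
Proof.
  induction l; [reflexivity|]. simpl filter. unfold nzb at 1.
  destruct (Req_EM_T (F a) 0); rewrite ?sumR_cons, IHl; [rewrite e; ring|reflexivity].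
Qed.

Lemma sumR_support {A} (F : A -> R) l1 l2 : NoDup l1 -> NoDup l2 ->
  (forall x, F x <> 0 -> In x l1) -> (forall x, F x <> 0 -> In x l2) ->
  sumR F l1 = sumR F l2.
Proof.
  intros N1 N2 H1 H2. rewrite (sumR_filter F l1), (sumR_filter F l2).
  apply sumR_perm, NoDup_Permutation; try apply NoDup_filter; auto.
  intros x; rewrite !filter_In; unfold nzb; destruct (Req_EM_T (F x) 0); split; intros [_ Hb]; try discriminate;
  split; auto.
Qed.

Lemma nodup_exists {A} (l : list A) : exists l', NoDup l' /\ forall x, In x l' <-> In x l.
Proof.
  induction l as [|a l [l' [N H]]].
  - exists nil; split; [constructor|simpl; tauto].
  - destruct (classic (In a l')).
    + exists l'; split; auto. intros x; simpl; rewrite <- H. split; auto. intros [<-|]; auto.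
    + exists (a :: l'); split; [constructor; auto|]. intros x; simpl; rewrite H; tauto.
Qed.


Lemma iter_face (M : OMap) k d : face M (Nat.iter k (nxt M) d) = face M d.
Proof. induction k; simpl; [reflexivity|]. rewrite nxt_face; auto. Qed.

Lemma in_bdarts (M : OMap) p d : In d (bdarts M p) <-> face M d = p.
Proof.
  unfold bdarts; rewrite in_map_iff; split.
  - intros [k [<- _]]. rewrite iter_face, fdart_face; reflexivity.
  - intros <-. destruct (face_orbit M d) as [k [Hk E]]. exists k; split; auto.
    apply in_seq; lia.
Qed.

Lemma iter_inj (M : OMap) k d d' : Nat.iter k (nxt M) d = Nat.iter k (nxt M) d' -> d = d'.
Proof. induction k; simpl; auto. intros H; apply IHk, nxt_inj, H. Qed.

Lemma iter_add (M : OMap) a b d : Nat.iter (a + b) (nxt M) d = Nat.iter a (nxt M) (Nat.iter b (nxt M) d).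
Proof. apply Nat.iter_add. Qed.

Lemma bdarts_NoDup (M : OMap) p : NoDup (bdarts M p).
Proof.
  unfold bdarts. apply NoDup_map_NoDup_ForallPairs; [|apply seq_NoDup].
  intros i j Hi Hj E. apply in_seq in Hi; apply in_seq in Hj.
  destruct (Nat.lt_trichotomy i j) as [H|[H|H]]; auto; exfalso.
  - replace j with (i + (j - i))%nat in E by lia. rewrite iter_add in E.
    apply (iter_inj M i) in E.
    apply (fdeg_min M p (j - i)); [lia|]. symmetry; exact E.
  - replace i with (j + (i - j))%nat in E by lia. rewrite iter_add in E.
    apply (iter_inj M j) in E.
    apply (fdeg_min M p (i - j)); [lia|]. exact E.
Qed.

Lemma tgt_nxt (M : OMap) d : tgt M d = src M (nxt M d).
Proof. unfold tgt; rewrite nxt_src; reflexivity. Qed.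

Lemma sum_seq_shift (G : nat -> R) m : G m = G 0%nat ->
  sumR (fun k => G (S k)) (seq 0 m) = sumR G (seq 0 m).
Proof.
  intros H. rewrite <- (sumR_map G S). rewrite seq_shift.
  destruct m as [|m]; [reflexivity|].
  rewrite seq_S. change (seq 0 (S m)) with (0%nat :: seq 1 m).
  rewrite sumR_app, sumR_cons. unfold sumR at 2; simpl. rewrite H, sumR_cons. ring.
Qed.

Lemma bdarts_shift (M : OMap) (F : dart M -> R) p :
  sumR (fun d => F (nxt M d)) (bdarts M p) = sumR F (bdarts M p).
Proof.
  unfold bdarts. rewrite !sumR_map.
  apply (sum_seq_shift (fun k => F (Nat.iter k (nxt M) (fdart M p)))).
  rewrite fdeg_cycle; reflexivity.
Qed.

Lemma in_flat (M : OMap) L d : In d (flat_map (bdarts M) L) <-> In (face M d) L.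
Proof.
  rewrite in_flat_map; split.
  - intros [p [Hp Hd]]. apply in_bdarts in Hd; subst; auto.
  - intros H; exists (face M d); split; auto; apply in_bdarts; auto.
Qed.

Lemma flat_NoDup (M : OMap) L : NoDup L -> NoDup (flat_map (bdarts M) L).
Proof.
  induction 1; simpl; [constructor|].
  apply NoDup_app; auto using bdarts_NoDup.
  intros d Hd Hd'. apply in_bdarts in Hd. apply in_flat in Hd'. subst; auto.
Qed.


Lemma is_derive_eq (f : R -> R) x l l' : is_derive f x l -> l = l' -> is_derive f x l'.
Proof. intros H <-; exact H. Qed.
Lemma d_plus (f g : R -> R) x a b : is_derive f x a -> is_derive g x b -> is_derive (fun t => f t + g t) x (a + b).
Proof. intros; apply (is_derive_plus f g); auto. Qed.
Lemma d_minus (f g : R -> R) x a b : is_derive f x a -> is_derive g x b -> is_derive (fun t => f t - g t) x (a - b).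
Proof. intros; apply (is_derive_minus f g); auto. Qed.
Lemma d_mult (f g : R -> R) x a b : is_derive f x a -> is_derive g x b -> is_derive (fun t => f t * g t) x (a * g x + f x * b).
Proof. intros; apply (is_derive_mult f g); auto. intros; apply Rmult_comm. Qed.
Lemma d_const (c x : R) : is_derive (fun _ => c) x 0.
Proof. apply (is_derive_const c). Qed.

Definition vderiv (a : R -> vec3) (x : R) (a' : vec3) :=
  is_derive (fun t => v3x (a t)) x (v3x a') /\ is_derive (fun t => v3y (a t)) x (v3y a') /\
  is_derive (fun t => v3z (a t)) x (v3z a').

Ltac dsolve := match goal with
  | |- is_derive (fun t => _ + _) _ _ => apply d_plus; [dsolve|dsolve]
  | |- is_derive (fun t => _ - _) _ _ => apply d_minus; [dsolve|dsolve]
  | |- is_derive (fun t => _ * _) _ _ => apply d_mult; [dsolve|dsolve]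
  | _ => first [eassumption | apply d_const]
  end.

Lemma vderiv_dotcross (a b : R -> vec3) x a' b' (nn : vec3) : vderiv a x a' -> vderiv b x b' ->
  is_derive (fun t => v3dot (v3cross (a t) (b t)) nn) x
    (v3dot (v3cross a' (b x)) nn + v3dot (v3cross (a x) b') nn).
Proof.
  intros [ax [ay az]] [bx [by0 bz]]. unfold v3dot, v3cross; cbn [v3x v3y v3z].
  eapply is_derive_eq; [dsolve|]. cbv beta. match goal with |- ?A = ?B => change (@eq R A B) end. ring.
Qed.

Ltac req := cbv beta; match goal with |- ?A = ?B => change (@eq R A B) end; ring.

Lemma vderiv_dot (a : R -> vec3) x a' (nn : vec3) : vderiv a x a' ->
  is_derive (fun t => v3dot (a t) nn) x (v3dot a' nn).
Proof.
  intros [ax [ay az]]. unfold v3dot. eapply is_derive_eq; [dsolve|]. req.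
Qed.

Lemma vderiv_lin (h1 h2 h3 : R -> R) (x d1 d2 d3 : R) (c : R) (a b e : vec3) :
  is_derive h1 x d1 -> is_derive h2 x d2 -> is_derive h3 x d3 ->
  vderiv (fun t => v3scale c (v3add (v3add (v3scale (h1 t) a) (v3scale (h2 t) b)) (v3scale (h3 t) e))) x
         (v3scale c (v3add (v3add (v3scale d1 a) (v3scale d2 b)) (v3scale d3 e))).
Proof.
  intros H1 H2 H3. unfold vderiv, v3scale, v3add; cbn [v3x v3y v3z].
  split; [|split]; (eapply is_derive_eq; [dsolve|]; req).
Qed.

Lemma rot_src (M : OMap) d : src M (rot M d) = src M d.
Proof. unfold rot. rewrite nxt_src, rev_invol. reflexivity. Qed.

Section Deriv.
Variable M : OMap.
Variable n : fc M -> vec3.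
Variable ht : R -> fc M -> R.
Variable ft : R -> vert M -> vec3.
Hypothesis Hft : forall t d, v3dot (ft t (src M d)) (n (face M d)) = ht t (face M d).
Hypothesis Hhd : forall p, ex_derive (fun s => ht s p) 0.
Hypothesis Hdet : forall d, det3 (n (face M d)) (n (face M (rot M d))) (n (face M (rot M (rot M d)))) <> 0.

Definition N1 d := n (face M d).
Definition N2 d := n (face M (rot M d)).
Definition N3 d := n (face M (rot M (rot M d))).
Definition Dt d := det3 (N1 d) (N2 d) (N3 d).

Lemma inv_scale (c : R) (x : vec3) : c <> 0 -> x = v3scale (/ c) (v3scale c x).
Proof. intros H. destruct x; unfold v3scale; simpl; f_equal; field; auto. Qed.

Lemma ft_formula t d : ft t (src M d) =
  v3scale (/ Dt d) (v3add (v3add (v3scale (ht t (face M d)) (v3cross (N2 d) (N3 d)))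
                                 (v3scale (ht t (face M (rot M d))) (v3cross (N3 d) (N1 d))))
                         (v3scale (ht t (face M (rot M (rot M d)))) (v3cross (N1 d) (N2 d)))).
Proof.
  rewrite (inv_scale (Dt d) (ft t (src M d))) by apply Hdet.
  unfold Dt at 2. rewrite cramer_id. unfold N1, N2, N3.
  rewrite <- (Hft t d), <- (Hft t (rot M d)), <- (Hft t (rot M (rot M d))), !rot_src. reflexivity.
Qed.

Definition hdot p := Derive (fun s => ht s p) 0.

Lemma hd_is p : is_derive (fun s => ht s p) 0 (hdot p).
Proof. apply Derive_correct, Hhd. Qed.

Definition fdot (v : vert M) : vec3 :=
  V3 (Derive (fun t => v3x (ft t v)) 0) (Derive (fun t => v3y (ft t v)) 0) (Derive (fun t => v3z (ft t v)) 0).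

Lemma fdot_is v : vderiv (fun t => ft t v) 0 (fdot v).
Proof.
  destruct (vert_dart M v) as [d <-].
  pose proof (vderiv_lin _ _ _ 0 _ _ _ (/ Dt d) (v3cross (N2 d) (N3 d)) (v3cross (N3 d) (N1 d)) (v3cross (N1 d) (N2 d))
     (hd_is (face M d)) (hd_is (face M (rot M d))) (hd_is (face M (rot M (rot M d))))) as [X [Y Z]].
  unfold vderiv, fdot; cbn [v3x v3y v3z].
  split; [|split]; apply Derive_correct; eexists;
  [ apply (is_derive_ext _ _ _ _ (fun t => f_equal v3x (eq_sym (ft_formula t d))) X)
  | apply (is_derive_ext _ _ _ _ (fun t => f_equal v3y (eq_sym (ft_formula t d))) Y)
  | apply (is_derive_ext _ _ _ _ (fun t => f_equal v3z (eq_sym (ft_formula t d))) Z)].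
Qed.

Lemma fdot_dot d : v3dot (fdot (src M d)) (n (face M d)) = hdot (face M d).
Proof.
  pose proof (vderiv_dot _ _ _ (n (face M d)) (fdot_is (src M d))) as H.
  apply is_derive_unique in H. rewrite <- H. unfold hdot. apply Derive_ext. intro t; apply Hft.
Qed.

Lemma area_is p : is_derive (fun t => face_area M (ft t) n p) 0
  (/ 2 * sumR (fun d => v3dot (v3cross (fdot (src M d)) (ft 0 (tgt M d))) (n p)
                      + v3dot (v3cross (ft 0 (src M d)) (fdot (tgt M d))) (n p)) (bdarts M p)).
Proof.
  unfold face_area. apply (is_derive_scal _ 0 (/2)).
  induction (bdarts M p) as [|d l IH].
  - unfold sumR; simpl. apply d_const.
  - unfold sumR in *; simpl. apply d_plus; auto.
    apply vderiv_dotcross; apply fdot_is.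
Qed.

End Deriv.



Lemma lagrange (a b : vec3) : v3dot (v3cross a b) (v3cross a b) = v3dot a a * v3dot b b - v3dot a b * v3dot a b.
Proof. vdestr; vunf; ring. Qed.

Lemma cross_nz (a b : vec3) : v3dot a a = 1 -> v3dot b b = 1 -> a <> b -> a <> v3opp b ->
  v3dot a b * v3dot a b <> 1.
Proof.
  intros Ha Hb N1 N2 E. set (s := v3dot a b) in *.
  assert (Hz : v3sub a (v3scale s b) = v3zero).
  { apply dot_self_zero.
    assert (v3dot (v3sub a (v3scale s b)) (v3sub a (v3scale s b)) = v3dot a a - 2 * s * s + s * s * v3dot b b)
      by (unfold s; vdestr; vunf; ring). rewrite H, Ha, Hb. lra. }
  assert (s = 1 \/ s = -1) as [Hs|Hs] by nra.
  - apply N1. rewrite Hs in Hz. destruct a, b; vunf; injection Hz; intros; f_equal; lra.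
  - apply N2. rewrite Hs in Hz. destruct a, b; vunf; injection Hz; intros; f_equal; lra.
Qed.

Lemma par_lemma (w e np nr : vec3) :
  v3dot w np = 0 -> v3dot w nr = 0 -> v3dot e np = 0 -> v3dot e nr = 0 ->
  v3dot (v3cross np nr) (v3cross np nr) <> 0 -> v3dot w (v3cross e np) = 0.
Proof.
  intros H1 H2 H3 H4 HC. set (c := v3cross np nr) in *. set (C := v3dot c c) in *.
  assert (I : forall u, v3dot u np = 0 -> v3dot u nr = 0 -> v3scale C u = v3scale (v3dot c u) c).
  { intros u U1 U2.
    assert (v3scale C u = v3add (v3scale (v3dot c u) c)
      (v3cross c (v3sub (v3scale (v3dot u nr) np) (v3scale (v3dot u np) nr)))) as ->
      by (unfold C, c; vdestr; vunf; f_equal; ring).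
    rewrite U1, U2. unfold c; vdestr; vunf; f_equal; ring. }
  assert (E : C * C * v3dot w (v3cross e np) = v3dot (v3scale C w) (v3cross (v3scale C e) np))
    by (vdestr; vunf; ring).
  rewrite (I w H1 H2), (I e H3 H4) in E.
  assert (C * C * v3dot w (v3cross e np) = 0).
  { rewrite E. unfold c; vdestr; vunf; ring. }
  apply Rmult_integral in H as [H|H]; auto. exfalso; apply Rmult_integral in H as [|]; auto.
Qed.

Lemma gram_lemma (x e np nr : vec3) : v3dot e np = 0 -> v3dot e nr = 0 -> v3dot np np = 1 ->
  v3dot (v3cross np nr) e * v3dot x (v3cross e np) = v3dot e e * (v3dot x nr - v3dot x np * v3dot np nr).
Proof.
  intros H1 H2 H3.
  assert (G : v3dot (v3cross np nr) e * v3dot x (v3cross e np) =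
   v3dot np np * (v3dot nr x * v3dot e e - v3dot nr e * v3dot e x)
   - v3dot np x * (v3dot nr np * v3dot e e - v3dot nr e * v3dot e np)
   + v3dot np e * (v3dot nr np * v3dot e x - v3dot nr x * v3dot e np)) by (vdestr; vunf; ring).
  rewrite G.
  replace (v3dot nr e) with 0 by (rewrite <- H2; vdestr; vunf; ring).
  replace (v3dot np e) with 0 by (rewrite <- H1; vdestr; vunf; ring).
  rewrite H1, H3.
  replace (v3dot nr x) with (v3dot x nr) by (vdestr; vunf; ring).
  replace (v3dot np x) with (v3dot x np) by (vdestr; vunf; ring).
  replace (v3dot nr np) with (v3dot np nr) by (vdestr; vunf; ring). ring.
Qed.

Lemma dot_sub (a b c : vec3) : v3dot (v3sub a b) c = v3dot a c - v3dot b c.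
Proof. vdestr; vunf; ring. Qed.

Lemma tan_half (a : R) : - PI < a < PI -> sin a <> 0 -> tan (a / 2) = (1 - cos a) / sin a.
Proof.
  intros [H1 H2] Hs.
  assert (Hc : 0 < cos (a / 2)) by (apply cos_gt_0; lra).
  set (b := a / 2) in *. assert (Ha : a = 2 * b) by (unfold b; field).
  rewrite Ha in Hs |- *.
  rewrite sin_2a, cos_2a_sin in *. unfold tan. field.
  split; [lra|]. intro E; apply Hs. rewrite E; ring.
Qed.

Section Geo.
Variable M : OMap.
Variable f : vert M -> vec3.
Variable n : fc M -> vec3.
Variable alpha : dart M -> R.
Hypothesis Hpoly : polyhedral M f n.
Hypothesis Hlen : forall d, f (tgt M d) <> f (src M d).
Hypothesis Hadj : forall d, n (face M d) <> n (face M (drev M d)) /\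
                      n (face M d) <> v3opp (n (face M (drev M d))).
Hypothesis Halpha : forall d, is_dihedral M f n d (alpha d).
Variable fd : vert M -> vec3.
Variable hd : fc M -> R.
Hypothesis Hfd : forall d, v3dot (fd (src M d)) (n (face M d)) = hd (face M d).

Definition hf := height M f n.
Lemma Hf d : v3dot (f (src M d)) (n (face M d)) = hf (face M d).
Proof. unfold hf, height. symmetry. pose proof (proj2 Hpoly (fdart M (face M d)) d (fdart_face M _)) as H.
  rewrite fdart_face in H. exact H. Qed.

Lemma unitn p : v3dot (n p) (n p) = 1.
Proof. apply unit_dot, (proj1 Hpoly). Qed.

Lemma src_rev_nxt d : src M (nxt M (drev M d)) = src M d.
Proof. rewrite nxt_src, rev_invol; reflexivity. Qed.

Lemma edge_orth (g : vert M -> vec3) (k : fc M -> R) :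
  (forall d, v3dot (g (src M d)) (n (face M d)) = k (face M d)) ->
  forall d, v3dot (v3sub (g (tgt M d)) (g (src M d))) (n (face M d)) = 0 /\
            v3dot (v3sub (g (tgt M d)) (g (src M d))) (n (face M (drev M d))) = 0.
Proof.
  intros H d. rewrite !dot_sub. split.
  - rewrite tgt_nxt. rewrite <- (nxt_face M d) at 1. rewrite !H, nxt_face. ring.
  - unfold tgt. rewrite H.
    assert (v3dot (g (src M d)) (n (face M (drev M d))) = k (face M (drev M d))) as ->.
    { rewrite <- (src_rev_nxt d), <- (nxt_face M (drev M d)). apply H. }
    ring.
Qed.

Definition ev d := v3sub (f (tgt M d)) (f (src M d)).
Definition ell d := edge_length M f d.

Lemma Cnz d : v3dot (n (face M d)) (n (face M (drev M d))) * v3dot (n (face M d)) (n (face M (drev M d))) <> 1.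
Proof. destruct (Hadj d). apply cross_nz; auto using unitn. Qed.

Lemma cross_pos d : v3dot (v3cross (n (face M d)) (n (face M (drev M d)))) (v3cross (n (face M d)) (n (face M (drev M d)))) <> 0.
Proof. rewrite lagrange, !unitn. pose proof (Cnz d). lra. Qed.

Lemma sin_nz d : sin (alpha d) <> 0.
Proof.
  intro E. destruct (Halpha d) as [_ [Hc _]]. pose proof (sin2_cos2 (alpha d)).
  rewrite E, Hc in H. apply (Cnz d). unfold Rsqr in H. lra.
Qed.

Lemma ell_pos d : 0 < ell d.
Proof.
  unfold ell, edge_length, v3norm. apply sqrt_lt_R0.
  destruct (Rle_lt_or_eq_dec 0 (v3dot (v3sub (f (tgt M d)) (f (src M d))) (v3sub (f (tgt M d)) (f (src M d))))) as [|E]; auto.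
  - set (u := v3sub _ _). destruct u; vunf; nra.
  - exfalso. apply (Hlen d). symmetry in E. apply dot_self_zero in E.
    destruct (f (tgt M d)), (f (src M d)); vunf; injection E; intros; f_equal; lra.
Qed.

Lemma ell2 d : v3dot (ev d) (ev d) = ell d * ell d.
Proof. unfold ell, edge_length, v3norm, ev. rewrite sqrt_sqrt; auto. set (u := v3sub _ _); destruct u; vunf; nra. Qed.

Lemma sin_ell d : ell d * sin (alpha d) = v3dot (v3cross (n (face M d)) (n (face M (drev M d)))) (ev d).
Proof.
  destruct (Halpha d) as [_ [_ Hs]]. rewrite Hs. fold (ell d). unfold ev.
  pose proof (ell_pos d). set (u := v3sub _ _). set (c := v3cross _ _).
  destruct u, c; vunf. field. lra.
Qed.

Definition Tdart d := v3dot (fd (src M d)) (v3cross (ev d) (n (face M d))).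

Lemma Tdart_val d : Tdart d = ell d * (hd (face M (drev M d)) - hd (face M d) * cos (alpha d)) / sin (alpha d).
Proof.
  destruct (edge_orth f hf Hf d) as [E1 E2]. fold (ev d) in E1, E2.
  pose proof (gram_lemma (fd (src M d)) (ev d) _ _ E1 E2 (unitn _)) as G.
  rewrite <- sin_ell, ell2 in G.
  destruct (Halpha d) as [_ [Hc _]]. rewrite <- Hc in G.
  rewrite Hfd in G.
  assert (Hr : v3dot (fd (src M d)) (n (face M (drev M d))) = hd (face M (drev M d))).
  { rewrite <- (src_rev_nxt d), <- (nxt_face M (drev M d)). apply Hfd. }
  rewrite Hr in G. unfold Tdart. pose proof (ell_pos d). pose proof (sin_nz d).
  apply (Rmult_eq_reg_l (ell d * sin (alpha d))); [|apply Rmult_integral_contrapositive; split; lra].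
  rewrite G. field. auto.
Qed.

Lemma tgt_rev d : tgt M (drev M d) = src M d.
Proof. unfold tgt; rewrite rev_invol; reflexivity. Qed.

Lemma ell_rev d : ell (drev M d) = ell d.
Proof. unfold ell, edge_length, v3norm. rewrite tgt_rev. unfold tgt. f_equal.
  set (a := f _); set (b := f _). vdestr; vunf; ring. Qed.

Lemma sin_rev d : sin (alpha (drev M d)) = sin (alpha d).
Proof.
  destruct (Halpha d) as [_ [_ H1]]. destruct (Halpha (drev M d)) as [_ [_ H2]].
  rewrite H1, H2. fold (ell d) (ell (drev M d)). rewrite ell_rev, rev_invol, tgt_rev. unfold tgt.
  set (a := n _); set (b := n _); set (c := f _); set (e := f _). vdestr; vunf; ring.
Qed.

Definition gd d := ell d * hd (face M d) / sin (alpha d).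
Definition Kd d := hd (face M d) * ell d * cos (alpha d) / sin (alpha d).

Lemma Tdart_gK d : Tdart d = gd (drev M d) - Kd d.
Proof. rewrite Tdart_val. unfold gd, Kd. rewrite ell_rev, sin_rev. field. apply sin_nz. Qed.

Lemma tan_gK d : hd (face M d) * (ell d * tan (alpha d / 2)) = gd d - Kd d.
Proof.
  destruct (Halpha d) as [Ha _]. rewrite tan_half; auto using sin_nz.
  unfold gd, Kd. field. apply sin_nz.
Qed.

Lemma per_id (a b x y nn : vec3) : v3dot (v3cross a y) nn + v3dot (v3cross x b) nn =
  v3dot a (v3cross (v3sub y x) nn) + v3dot b (v3cross (v3sub y x) nn) - (v3dot (v3cross b y) nn - v3dot (v3cross a x) nn).
Proof. vdestr; vunf; ring. Qed.

Lemma dA_T p : / 2 * sumR (fun d => v3dot (v3cross (fd (src M d)) (f (tgt M d))) (n p)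
                      + v3dot (v3cross (f (src M d)) (fd (tgt M d))) (n p)) (bdarts M p)
  = sumR Tdart (bdarts M p).
Proof.
  set (F := fun d => v3dot (v3cross (fd (src M d)) (f (src M d))) (n p)).
  rewrite (sumR_ext _ (fun d => 2 * Tdart d - (F (nxt M d) - F d))).
  - rewrite sumR_minus, sumR_scal, sumR_minus, bdarts_shift. field.
  - intros d Hd. apply in_bdarts in Hd. subst p. unfold F. rewrite <- !tgt_nxt.
    rewrite per_id. fold (ev d).
    destruct (edge_orth f hf Hf d) as [E1 E2]. destruct (edge_orth fd hd Hfd d) as [W1 W2].
    pose proof (par_lemma _ _ _ _ W1 W2 E1 E2 (cross_pos d)) as P.
    rewrite dot_sub in P. fold (ev d) in P. unfold Tdart. lra.
Qed.

Lemma sum_identity (Lf : list (fc M)) : NoDup Lf ->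
  (forall d, hd (face M d) <> 0 -> In (face M d) Lf /\ In (face M (drev M d)) Lf) ->
  sumR (fun p => sumR Tdart (bdarts M p)) Lf = sumR (fun p => hd p * (2 * mean_curv M f alpha p)) Lf.
Proof.
  intros ND Hc.
  rewrite (sumR_ext (fun p => hd p * _) (fun p => sumR gd (bdarts M p) - sumR Kd (bdarts M p))).
  2:{ intros p _. unfold mean_curv. rewrite <- sumR_minus.
      replace (hd p * (2 * (/ 2 * sumR (fun d => edge_length M f d * tan (alpha d / 2)) (bdarts M p))))
        with (sumR (fun d => hd p * (edge_length M f d * tan (alpha d / 2))) (bdarts M p))
        by (rewrite sumR_scal; field).
      apply sumR_ext. intros d Hd. apply in_bdarts in Hd. subst p. apply tan_gK. }
  rewrite (sumR_ext (fun p => sumR Tdart _) (fun p => sumR (fun d => gd (drev M d)) (bdarts M p) - sumR Kd (bdarts M p))).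
  2:{ intros p _. rewrite <- sumR_minus. apply sumR_ext. intros d _. apply Tdart_gK. }
  rewrite !sumR_minus. f_equal.
  rewrite <- !(sumR_flat_map _ (bdarts M)).
  rewrite <- (sumR_map gd (drev M)).
  apply sumR_support.
  - apply FinFun.Injective_map_NoDup; [|apply flat_NoDup; auto].
    intros x y E. rewrite <- (rev_invol M x), <- (rev_invol M y), E; reflexivity.
  - apply flat_NoDup; auto.
  - intros d Hg. apply in_map_iff. exists (drev M d). split; [apply rev_invol|].
    apply in_flat. assert (hd (face M d) <> 0) by (intro E; apply Hg; unfold gd; rewrite E; field; apply sin_nz).
    rewrite <- (rev_invol M d) in H. destruct (Hc _ H) as [H1 H2]. rewrite rev_invol in H2.
    rewrite rev_invol in H1. auto.
  - intros d Hg. apply in_flat. assert (hd (face M d) <> 0) by (intro E; apply Hg; unfold gd; rewrite E; field; apply sin_nz).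
    apply Hc; auto.
Qed.

Lemma coverage (Lf : list (fc M)) :
  (forall d, hd (face M d) <> 0 -> In (face M d) Lf /\ In (face M (drev M d)) Lf) ->
  forall p, sumR Tdart (bdarts M p) <> 0 -> In p Lf.
Proof.
  intros Hc p H. apply sumR_nz in H as [d [Hd HT]]. apply in_bdarts in Hd. subst p.
  rewrite Tdart_gK in HT.
  destruct (classic (hd (face M d) = 0)) as [E|E].
  - assert (hd (face M (drev M d)) <> 0).
    { intro E2; apply HT. unfold gd, Kd. rewrite E, E2. field. split; apply sin_nz. }
    destruct (Hc _ H) as [_ H2]. rewrite rev_invol in H2. auto.
  - apply Hc; auto.
Qed.
End Geo.


Lemma variation (M : OMap) (f : vert M -> vec3) (n : fc M -> vec3) (alpha : dart M -> R)
    (Htri : trivalent M)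
    (Hpoly : polyhedral M f n)
    (Hlen : forall d, f (tgt M d) <> f (src M d))
    (Hindep : forall d, lin_indep3 (n (face M d)) (n (face M (rot M d)))
                                   (n (face M (rot M (rot M d)))))
    (Hadj : forall d, n (face M d) <> n (face M (drev M d)) /\
                      n (face M d) <> v3opp (n (face M (drev M d))))
    (Halpha : forall d, is_dihedral M f n d (alpha d))
    (ht : R -> fc M -> R) (ft : R -> vert M -> vec3)
    (Hinit : forall p, ht 0 p = height M f n p)
    (Hhd : forall p, ex_derive (fun s => ht s p) 0)
    (S : list (fc M)) (HS : forall p, Derive (fun s => ht s p) 0 <> 0 -> In p S)
    (Hft : forall t d, v3dot (ft t (src M d)) (n (face M d)) = ht t (face M d)) :
  exists Lf : list (fc M), NoDup Lf /\
    (forall p, Derive (fun t => face_area M (ft t) n p) 0 <> 0 -> In p Lf) /\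
    (forall p, In p S -> In p Lf) /\
    sumR (fun p => Derive (fun t => face_area M (ft t) n p) 0) Lf =
    sumR (fun p => hdot M ht p * (2 * mean_curv M f alpha p)) Lf.
Proof.
  assert (Hdet : forall d, det3 (n (face M d)) (n (face M (rot M d))) (n (face M (rot M (rot M d)))) <> 0).
  { intro d. apply det_nz; auto; apply (proj1 Hpoly). }
  assert (F0 : ft 0 = f).
  { apply functional_extensionality. intro v. destruct (vert_dart M v) as [d <-].
    rewrite (ft_formula M n ht ft Hft Hdet 0 d), !Hinit.
    transitivity (v3scale (/ Dt M n d) (v3scale (Dt M n d) (f (src M d))));
      [|symmetry; apply inv_scale; apply Hdet].
    f_equal. unfold Dt. rewrite cramer_id. unfold N1, N2, N3.
    pose proof (Hf M f n Hpoly) as HF. unfold hf in HF.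
    assert (A2 : v3dot (f (src M d)) (n (face M (rot M d))) = height M f n (face M (rot M d)))
      by (rewrite <- (rot_src M d); apply HF).
    assert (A3 : v3dot (f (src M d)) (n (face M (rot M (rot M d)))) = height M f n (face M (rot M (rot M d))))
      by (rewrite <- (rot_src M d), <- (rot_src M (rot M d)); apply HF).
    rewrite (HF d), A2, A3. reflexivity. }
  pose proof (fdot_dot M n ht ft Hft Hhd Hdet) as Hfd.
  assert (DA : forall p, Derive (fun t => face_area M (ft t) n p) 0 =
             sumR (Tdart M f n (fdot M ft)) (bdarts M p)).
  { intro p. rewrite <- (dA_T M f n Hpoly Hadj _ _ Hfd). rewrite <- F0.
    apply is_derive_unique, (area_is M n ht ft Hft Hhd Hdet p). }
  set (L0 := S ++ flat_map (fun q => map (fun d => face M (drev M d)) (bdarts M q)) S).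
  destruct (nodup_exists L0) as [Lf [ND HL]].
  assert (Hc : forall d, hdot M ht (face M d) <> 0 -> In (face M d) Lf /\ In (face M (drev M d)) Lf).
  { intros d Hd. assert (Hd2 : In (face M d) S) by (apply HS; exact Hd). clear Hd. rename Hd2 into Hd. split; apply HL; unfold L0; apply in_or_app.
    - left; auto.
    - right. apply in_flat_map. exists (face M d); split; auto. apply (in_map (fun d => face M (drev M d))). apply in_bdarts; auto. }
  exists Lf; split; [auto|split; [|split]].
  - intros p Hp. rewrite DA in Hp. eapply coverage; eauto.
  - intros p Hp. apply HL. unfold L0; apply in_or_app; left; auto.
  - rewrite (sumR_ext _ (fun p => sumR (Tdart M f n (fdot M ft)) (bdarts M p))) by (intros; apply DA).
    eapply sum_identity; eauto.
Qed.

Lemma cram_dot (n1 n2 n3 : vec3) (a b c : R) : det3 n1 n2 n3 <> 0 ->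
  let x := v3scale (/ det3 n1 n2 n3) (v3add (v3add (v3scale a (v3cross n2 n3)) (v3scale b (v3cross n3 n1))) (v3scale c (v3cross n1 n2))) in
  v3dot x n1 = a /\ v3dot x n2 = b /\ v3dot x n3 = c.
Proof.
  intros H; cbv zeta. unfold det3 in *. destruct n1, n2, n3; unfold v3dot, v3cross, v3add, v3scale in *; simpl in *.
  split; [|split]; field; auto.
Qed.

Lemma dot_lin (a b c : vec3) (t : R) : v3dot (v3add a (v3scale t b)) c = v3dot a c + t * v3dot b c.
Proof. destruct a, b, c; unfold v3dot, v3add, v3scale; simpl; ring. Qed.

Lemma d_id (x : R) : is_derive (fun t => t) x 1.
Proof. apply (is_derive_id x). Qed.

Lemma affine_smooth (a b : R) k t : ex_derive_n (fun s => a + s * b) k t.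
Proof.
  apply ex_derive_n_plus.
  - apply filter_forall; intros; apply ex_derive_n_const.
  - apply filter_forall; intros. apply ex_derive_n_scal_r.
    apply (ex_derive_n_ext (fun x => x ^ 1)); [intro; ring|]. apply ex_derive_n_pow.
Qed.

Lemma affine_deriv (a b : R) : Derive (fun s => a + s * b) 0 = b.
Proof.
  apply is_derive_unique. eapply is_derive_eq.
  - apply d_plus; [apply d_const|apply d_mult; [apply d_id|apply d_const]].
  - req.
Qed.

Theorem mainTheorem3 (M : OMap) (f : vert M -> vec3) (n : fc M -> vec3)
    (alpha : dart M -> R)
    (Htri : trivalent M)
    (Hpoly : polyhedral M f n)
    (Hlen : forall d, f (tgt M d) <> f (src M d))
    (Hindep : forall d, lin_indep3 (n (face M d)) (n (face M (rot M d)))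
                                   (n (face M (rot M (rot M d)))))
    (Hadj : forall d, n (face M d) <> n (face M (drev M d)) /\
                      n (face M d) <> v3opp (n (face M (drev M d))))
    (Halpha : forall d, is_dihedral M f n d (alpha d)) :
  (forall p, mean_curv M f alpha p = 0) <->
  (forall (ht : R -> fc M -> R) (ft : R -> vert M -> vec3),
     (forall p, ht 0 p = height M f n p) ->
     (forall p k t, ex_derive_n (fun s => ht s p) k t) ->
     (exists L : list (fc M), forall p, Derive (fun s => ht s p) 0 <> 0 -> In p L) ->
     (forall t d, v3dot (ft t (src M d)) (n (face M d)) = ht t (face M d)) ->
     exists L : list (fc M),
       NoDup L /\
       (forall p, Derive (fun t => face_area M (ft t) n p) 0 <> 0 -> In p L) /\
       sumR (fun p => Derive (fun t => face_area M (ft t) n p) 0) L = 0).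
Proof.
  split.
  - intros HH ht ft Hinit Hsm [S HS] Hft.
    assert (Hhd : forall p, ex_derive (fun s => ht s p) 0) by (intro p; exact (Hsm p 1%nat 0)).
    destruct (variation M f n alpha Htri Hpoly Hlen Hindep Hadj Halpha ht ft Hinit Hhd S HS Hft)
      as [Lf [ND [C1 [_ E]]]].
    exists Lf; split; auto; split; auto. rewrite E. apply sumR_zero. intros p _. rewrite HH; ring.
  - intros HH p0.
    set (del := fun q : fc M => if excluded_middle_informative (q = p0) then 1 else 0).
    set (ht := fun (t : R) (q : fc M) => height M f n q + t * del q).
    set (dv := fun v : vert M => proj1_sig (constructive_indefinite_description _ (vert_dart M v))).
    assert (Hdv : forall v, src M (dv v) = v) by (intro v; unfold dv; destruct constructive_indefinite_description; auto).
    assert (Hdet : forall d, det3 (n (face M d)) (n (face M (rot M d))) (n (face M (rot M (rot M d)))) <> 0).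
    { intro d. apply det_nz; auto; apply (proj1 Hpoly). }
    set (w := fun v : vert M => let e := dv v in
      v3scale (/ det3 (N1 M n e) (N2 M n e) (N3 M n e))
        (v3add (v3add (v3scale (del (face M e)) (v3cross (N2 M n e) (N3 M n e)))
                      (v3scale (del (face M (rot M e))) (v3cross (N3 M n e) (N1 M n e))))
               (v3scale (del (face M (rot M (rot M e)))) (v3cross (N1 M n e) (N2 M n e))))).
    set (ft := fun (t : R) (v : vert M) => v3add (f v) (v3scale t (w v))).
    assert (Hft : forall t d, v3dot (ft t (src M d)) (n (face M d)) = ht t (face M d)).
    { intros t d. unfold ft, ht. rewrite dot_lin.
      pose proof (Hf M f n Hpoly d) as HF. unfold hf in HF. rewrite HF. f_equal. f_equal.
      unfold w. set (e := dv (src M d)).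
      destruct (cram_dot (N1 M n e) (N2 M n e) (N3 M n e) (del (face M e)) (del (face M (rot M e)))
                 (del (face M (rot M (rot M e)))) (Hdet e)) as [C1 [C2 C3]].
      assert (Hs : src M d = src M e) by (unfold e; rewrite Hdv; auto).
      clearbody e.
      destruct (proj2 (proj2 (proj2 (Htri e))) d Hs) as [Ed|[Ed|Ed]]; rewrite Ed; auto. }
    assert (Hhd : forall p, ex_derive (fun s => ht s p) 0).
    { intro p. exact (affine_smooth (height M f n p) (del p) 1%nat 0). }
    assert (Hder : forall p, Derive (fun s => ht s p) 0 = del p) by (intro p; apply affine_deriv).
    assert (HS : forall p, Derive (fun s => ht s p) 0 <> 0 -> In p (p0 :: nil)).
    { intros p Hp. rewrite Hder in Hp. unfold del in Hp. destruct excluded_middle_informative; [left; auto|].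
      exfalso; apply Hp; reflexivity. }
    assert (Hinit : forall p, ht 0 p = height M f n p) by (intro p; unfold ht; ring).
    destruct (HH ht ft Hinit (fun p k t => affine_smooth _ _ k t) (ex_intro _ _ HS) Hft) as [L [ND [Cov Sum]]].
    destruct (variation M f n alpha Htri Hpoly Hlen Hindep Hadj Halpha ht ft Hinit Hhd _ HS Hft)
      as [Lf [ND' [C1 [Sin E]]]].
    rewrite (sumR_support _ L Lf ND ND' Cov C1), E in Sum.
    rewrite (sumR_support _ Lf (p0 :: nil) ND') in Sum.
    + rewrite sumR_cons, sumR_nil in Sum. unfold hdot in Sum. rewrite Hder in Sum.
      unfold del in Sum. destruct excluded_middle_informative as [_|C]; [|exfalso; auto]. lra.
    + constructor; [simpl; tauto|constructor].
    + intros p Hp. apply Sin. unfold hdot in Hp. rewrite Hder in Hp. apply HS. rewrite Hder.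
      intro Z; apply Hp; rewrite Z; ring.
    + intros p Hp. unfold hdot in Hp. rewrite Hder in Hp. apply HS. rewrite Hder.
      intro Z; apply Hp; rewrite Z; ring.
Qed.
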